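(* Let $E$ be a Dedekind complete Riesz space with conditional expectation operator $T$, weak order unit $e$ with $Te=e$, and a filtration $(T_i)_{i\ge0}$ compatible with $T$. Let $(f_i)_{i\in\mathbb{N}}$ be a sequence in $E$ adapted to $(T_i)$ (i.e. $f_i\in\mathcal{R}(T_i)$) which is $e$-uniformly bounded, i.e. there is $B>0$ with $|f_i|\le Be$ for all $i$. Put $g_i:=f_i-T_{i-1}f_i$. Then $(g_i,T_i)$ is a martingale difference sequence (i.e. $g_i\in\mathcal{R}(T_i)$ and $T_ig_{i+1}=0$ for all $i$), and $$T\Big|\frac1n\sum_{i=1}^n g_i\Big|\to0\quad\text{(in order) as } n\to\infty.$$
   Context: A conditional expectation operator on a Dedekind complete Riesz space $E$ with a weak order unit is a positive, order continuous linear projection $T:E\to E$ which maps weak order units to weak order units and whose range $\mathcal{R}(T)$ is a Dedekind complete Riesz subspace of $E$. A filtration is a sequence $(T_i)$ of conditional expectations with $T_iT_j=T_i=T_jT_i$ for $i\le j$; it is compatible with $T$ if $T_iT=T=TT_i$ for all $i$. *)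

(* Defs.v *)
From HB Require Import structures.
From mathcomp Require Import all_boot all_order all_algebra.
From mathcomp Require Import reals.
Set Implicit Arguments. Unset Strict Implicit. Unset Printing Implicit Defensive.
Import Order.TTheory GRing.Theory Num.Theory.
Local Open Scope ring_scope.

Record riesz_space (R : realType) (E : lmodType R) : Type := RieszSpace {
  rle : E -> E -> Prop;
  rjoin : E -> E -> E;
  rle_refl : forall x, rle x x;
  rle_trans : forall x y z, rle x y -> rle y z -> rle x z;
  rle_anti : forall x y, rle x y -> rle y x -> x = y;
  rle_add : forall x y z, rle x y -> rle (x + z) (y + z);
  rle_scale : forall (a : R) x y, 0 <= a -> rle x y -> rle (a *: x) (a *: y);
  rjoin_ubl : forall x y, rle x (rjoin x y);
  rjoin_ubr : forall x y, rle y (rjoin x y);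
  rjoin_least : forall x y z, rle x z -> rle y z -> rle (rjoin x y) z
}.

Section Riesz.
Context {R : realType} {E : lmodType R} (L : riesz_space E).

Local Notation "x <=R y" := (rle L x y) (at level 70).

Definition rabs (x : E) : E := rjoin L x (- x).

Definition is_ub (S : E -> Prop) (u : E) := forall x, S x -> x <=R u.
Definition is_lb (S : E -> Prop) (u : E) := forall x, S x -> u <=R x.
Definition is_sup (S : E -> Prop) (s : E) :=
  is_ub S s /\ forall u, is_ub S u -> s <=R u.
Definition is_inf (S : E -> Prop) (s : E) :=
  is_lb S s /\ forall u, is_lb S u -> u <=R s.

Definition dedekind_complete :=
  forall S : E -> Prop, (exists x, S x) -> (exists u, is_ub S u) ->
  exists s, is_sup S s.

Definition ideal (P : E -> Prop) :=
  [/\ P 0, (forall x y, P x -> P y -> P (x + y)),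
      (forall (a : R) x, P x -> P (a *: x)) &
      (forall x y, P y -> rabs x <=R rabs y -> P x)].

Definition band (P : E -> Prop) :=
  ideal P /\
  forall (S : E -> Prop) s, (forall x, S x -> P x) -> is_sup S s -> P s.

Definition weak_order_unit (e : E) :=
  0 <=R e /\ forall x, forall P, band P -> P e -> P x.

Definition directed (A : Type) (leA : A -> A -> Prop) :=
  [/\ (exists a : A, True), (forall a, leA a a),
      (forall a b c, leA a b -> leA b c -> leA a c) &
      (forall a b, exists c, leA a c /\ leA b c)].

Definition decr_to0 (A : Type) (leA : A -> A -> Prop) (p : A -> E) :=
  (forall a b, leA a b -> p b <=R p a) /\
  is_inf (fun y => exists a, y = p a) 0.

Definition oconv (A : Type) (leA : A -> A -> Prop) (x : A -> E) (l : E) :=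
  exists p : A -> E, decr_to0 leA p /\ forall a, rabs (x a - l) <=R p a.

Definition seq_oconv (x : nat -> E) (l : E) :=
  oconv (fun m n : nat => (m <= n)%N) x l.

Definition order_continuous (T : E -> E) :=
  forall (A : Type) (leA : A -> A -> Prop), directed leA ->
  forall (x : A -> E) (l : E), oconv leA x l -> oconv leA (fun a => T (x a)) (T l).

Definition is_linear (T : E -> E) :=
  forall (a : R) x y, T (a *: x + y) = a *: T x + T y.

Definition positive_op (T : E -> E) := forall x, 0 <=R x -> 0 <=R T x.

Definition range (T : E -> E) (x : E) := exists y, T y = x.

Definition riesz_subspace (P : E -> Prop) :=
  [/\ P 0, (forall x y, P x -> P y -> P (x + y)),
      (forall (a : R) x, P x -> P (a *: x)) &
      (forall x y, P x -> P y -> P (rjoin L x y))].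

Definition dedekind_complete_sub (P : E -> Prop) :=
  forall S : E -> Prop, (forall x, S x -> P x) -> (exists x, S x) ->
  (exists u, P u /\ is_ub S u) ->
  exists s, [/\ P s, is_ub S s & forall u, P u -> is_ub S u -> s <=R u].

Definition cond_exp (T : E -> E) :=
  [/\ is_linear T, positive_op T, order_continuous T,
      (forall x, T (T x) = T x) &
      [/\ (forall u, weak_order_unit u -> weak_order_unit (T u)),
           riesz_subspace (range T) & dedekind_complete_sub (range T)]].

Definition filtration (Ti : nat -> E -> E) :=
  (forall i, cond_exp (Ti i)) /\
  forall i j, (i <= j)%N -> forall x, Ti i (Ti j x) = Ti i x /\ Ti j (Ti i x) = Ti i x.

Definition compatible (T : E -> E) (Ti : nat -> E -> E) :=
  forall i x, Ti i (T x) = T x /\ T (Ti i x) = T x.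

End Riesz.

(* Main.v *)
Require Import Defs.
From HB Require Import structures.
From mathcomp Require Import all_boot all_order all_algebra.
From mathcomp Require Import reals.
From mathcomp Require Import ring lra zify.
From Stdlib Require Import ClassicalEpsilon.
Set Implicit Arguments. Unset Strict Implicit. Unset Printing Implicit Defensive.
Import Order.TTheory GRing.Theory Num.Theory.
Local Open Scope ring_scope.


Section Basics.
Context {R : realType} {E : lmodType R} {L : riesz_space E}.
Local Notation "x <=R y" := (rle L x y) (at level 70).
Local Notation jn := (rjoin L).
Definition mt (x y : E) := - jn (-x) (-y).
Definition ps (x : E) := jn x 0.
Definition ng (x : E) := jn (-x) 0.
Local Notation ab := (rabs L).

Lemma lrefl x : x <=R x. Proof. exact: rle_refl. Qed.
Lemma ltr x y z : x <=R y -> y <=R z -> x <=R z. Proof. exact: rle_trans. Qed.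
Lemma lanti x y : x <=R y -> y <=R x -> x = y. Proof. exact: rle_anti. Qed.
Lemma laddr x y z : x <=R y -> x + z <=R y + z. Proof. exact: rle_add. Qed.
Lemma laddl x y z : x <=R y -> z + x <=R z + y.
Proof. by move=> h; rewrite ![z + _]addrC; apply: laddr. Qed.
Lemma ladd a b c d : a <=R b -> c <=R d -> a + c <=R b + d.
Proof. move=> h1 h2; apply: ltr (laddr _ h1) (laddl _ h2). Qed.
Lemma lsub0 x y : x <=R y <-> 0 <=R y - x.
Proof.
split=> h; first by have := laddr (-x) h; rewrite subrr.
by have := laddr x h; rewrite add0r subrK.
Qed.
Lemma lsubK x y : x <=R y -> 0 <=R y - x. Proof. by case: (lsub0 x y). Qed.
Lemma lsubK' x y : 0 <=R y - x -> x <=R y. Proof. by case: (lsub0 x y). Qed.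
Lemma lcancel s u : s <=R s - u -> u <=R 0.
Proof. by move=> h; have := laddr (u - s) h; rewrite addrC subrK addrA subrK subrr. Qed.
Lemma lsub_le0 x y : x <=R y -> x - y <=R 0.
Proof. by move=> h; have := laddr (-y) h; rewrite subrr. Qed.
Lemma ladd0 x y : 0 <=R x -> 0 <=R y -> 0 <=R x + y.
Proof. by move=> h1 h2; have := ladd h1 h2; rewrite addr0. Qed.
Lemma lsum0_nat (n : nat) (F : nat -> E) :
  (forall i, (i < n)%N -> 0 <=R F i) -> 0 <=R \sum_(0 <= i < n) F i.
Proof.
elim: n => [|n IH] h; first by rewrite big_geq //; apply: lrefl.
rewrite big_nat_recr //=; apply: ladd0; first by apply: IH => i hi; apply: h; apply: ltnW.
exact: h.
Qed.
Lemma lopp0' x : x <=R 0 -> 0 <=R - x.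
Proof. by move=> h; have := laddr (-x) h; rewrite subrr add0r. Qed.
Lemma lopp x y : x <=R y -> -y <=R -x.
Proof. move=> /lsub0 h; apply/lsub0; by rewrite opprK addrC. Qed.
Lemma lopp0 x : 0 <=R x -> -x <=R 0.
Proof. by move=> /lopp; rewrite oppr0. Qed.
Lemma lscale (a : R) x y : 0 <= a -> x <=R y -> a *: x <=R a *: y.
Proof. exact: rle_scale. Qed.
Lemma lscale0 (a : R) x : 0 <= a -> 0 <=R x -> 0 <=R a *: x.
Proof. by move=> ha hx; have := lscale ha hx; rewrite scaler0. Qed.
Lemma lscalel (a b : R) x : a <= b -> 0 <=R x -> a *: x <=R b *: x.
Proof.
move=> hab hx; apply/lsub0; rewrite -scalerBl; apply: lscale0 => //.
by rewrite subr_ge0.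
Qed.
Lemma lsum (I : Type) (r : seq I) (P : pred I) (F G : I -> E) :
  (forall i, P i -> F i <=R G i) ->
  \sum_(i <- r | P i) F i <=R \sum_(i <- r | P i) G i.
Proof.
move=> h; elim: r => [|a r IH]; first by rewrite !big_nil; exact: lrefl.
rewrite !big_cons; case: ifP => Pa //; apply: ladd => //; exact: h.
Qed.
Lemma lsum0 (I : Type) (r : seq I) (P : pred I) (F : I -> E) :
  (forall i, P i -> 0 <=R F i) -> 0 <=R \sum_(i <- r | P i) F i.
Proof. move=> h; have := lsum r h; by rewrite big1_eq. Qed.

Lemma jl x y : x <=R jn x y. Proof. exact: rjoin_ubl. Qed.
Lemma jr x y : y <=R jn x y. Proof. exact: rjoin_ubr. Qed.
Lemma jleast x y z : x <=R z -> y <=R z -> jn x y <=R z. Proof. exact: rjoin_least. Qed.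
Lemma jC x y : jn x y = jn y x.
Proof. by apply: lanti; apply: jleast; [apply: jr|apply: jl|apply: jr|apply: jl]. Qed.
Lemma jmono x y x' y' : x <=R x' -> y <=R y' -> jn x y <=R jn x' y'.
Proof. move=> h1 h2; apply: jleast; [apply: ltr h1 (jl _ _)|apply: ltr h2 (jr _ _)]. Qed.
Lemma lmvr x y z : x + z <=R y -> x <=R y - z.
Proof. by move=> h; have := laddr (-z) h; rewrite addrK. Qed.
Lemma lmvl x y z : x <=R y - z -> x + z <=R y.
Proof. by move=> h; have := laddr z h; rewrite subrK. Qed.
Lemma lmvs x y z : x <=R y + z -> x - z <=R y.
Proof. by move=> h; have := laddr (-z) h; rewrite addrK. Qed.
Lemma lmvs' x y z : x - z <=R y -> x <=R y + z.
Proof. by move=> h; have := laddr z h; rewrite subrK. Qed.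
Lemma jadd x y z : jn (x + z) (y + z) = jn x y + z.
Proof.
apply: lanti; first by apply: jleast; apply: laddr; [apply: jl|apply: jr].
apply: lmvl; apply: jleast; apply: lmvr; [apply: jl|apply: jr].
Qed.
Lemma jscale (a : R) x y : 0 <= a -> jn (a *: x) (a *: y) = a *: jn x y.
Proof.
move=> ha; have [->|a0] := eqVneq a 0.
  by rewrite !scale0r; apply: lanti; [apply: jleast; apply: lrefl|apply: jl].
have hi : 0 <= a^-1 by rewrite invr_ge0.
apply: lanti; first by apply: jleast; apply: lscale=> //; [apply: jl|apply: jr].
have -> : jn x y = a^-1 *: jn (a *: x) (a *: y).
  apply: lanti; last first.
    have := lscale hi (jleast (lscale ha (jl x y)) (lscale ha (jr x y))).
    by rewrite scalerA mulVf // scale1r.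
  apply: jleast.
    by have := lscale hi (jl (a *: x) (a *: y)); rewrite scalerA mulVf // scale1r.
  by have := lscale hi (jr (a *: x) (a *: y)); rewrite scalerA mulVf // scale1r.
by rewrite scalerA mulfV // scale1r; apply: lrefl.
Qed.

Lemma ml x y : mt x y <=R x.
Proof. by rewrite /mt -{2}[x]opprK; apply: lopp; apply: jl. Qed.
Lemma mr x y : mt x y <=R y.
Proof. by rewrite /mt -{2}[y]opprK; apply: lopp; apply: jr. Qed.
Lemma mgreat x y z : z <=R x -> z <=R y -> z <=R mt x y.
Proof.
move=> h1 h2; rewrite /mt -[z]opprK; apply: lopp; apply: jleast; exact: lopp.
Qed.
Lemma mC x y : mt x y = mt y x. Proof. by rewrite /mt jC. Qed.
Lemma mmono x y x' y' : x <=R x' -> y <=R y' -> mt x y <=R mt x' y'.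
Proof. move=> h1 h2; apply: mgreat; [apply: ltr (ml _ _) h1|apply: ltr (mr _ _) h2]. Qed.
Lemma madd x y z : mt (x + z) (y + z) = mt x y + z.
Proof. by rewrite /mt !opprD jadd opprD opprK. Qed.
Lemma mscale (a : R) x y : 0 <= a -> mt (a *: x) (a *: y) = a *: mt x y.
Proof. by move=> ha; rewrite /mt -!scalerN jscale // scalerN. Qed.
Lemma mid x y : x <=R y -> mt x y = x.
Proof. by move=> h; apply: lanti; [apply: ml|apply: mgreat => //; apply: lrefl]. Qed.
Lemma jid x y : x <=R y -> jn x y = y.
Proof. by move=> h; apply: lanti; [apply: jleast => //; apply: lrefl|apply: jr]. Qed.
Lemma jm x y : jn x y + mt x y = x + y.
Proof.
rewrite /mt; apply/eqP; rewrite subr_eq; apply/eqP.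
have := jadd (-x) (-y) (x + y).
rewrite addKr [- y + _]addrC addrK jC => ->.
by rewrite addrC.
Qed.

Lemma ps0 x : 0 <=R ps x. Proof. exact: jr. Qed.
Lemma ng0 x : 0 <=R ng x. Proof. exact: jr. Qed.
Lemma psng x : ps x - ng x = x.
Proof.
have := jm x 0; rewrite addr0 /mt oppr0 => h.
by rewrite /ps /ng -{3}h.
Qed.
Lemma psngm x : mt (ps x) (ng x) = 0.
Proof.
have := madd (ps x) (ng x) (- ng x); rewrite psng subrr.
have -> : mt x 0 = - ng x by rewrite /mt oppr0.
by move/(congr1 (fun v => v + ng x)); rewrite subrK addNr => <-.
Qed.
Lemma ps_id x : 0 <=R x -> ps x = x. Proof. by move=> h; rewrite /ps jC jid. Qed.
Lemma ng_id x : 0 <=R x -> ng x = 0.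
Proof. by move=> h; rewrite /ng jid //; apply: lopp0. Qed.
Lemma psN x : ps (- x) = ng x. Proof. by []. Qed.
Lemma ngN x : ng (- x) = ps x. Proof. by rewrite /ng opprK. Qed.

Lemma abx x : x <=R ab x. Proof. exact: jl. Qed.
Lemma abNx x : - x <=R ab x. Proof. exact: jr. Qed.
Lemma ab0 x : 0 <=R ab x.
Proof.
have h : 0 <=R ab x + ab x by rewrite -(subrr x) addrC; apply: ladd; [apply: abNx|apply: abx].
have h2 : (1 + 1 : R) != 0 by rewrite paddr_eq0 ?ler01 // oner_eq0.
have -> : ab x = (1 + 1 : R)^-1 *: (ab x + ab x).
  by rewrite -{2 3}[ab x]scale1r -scalerDl scalerA mulVf ?scale1r.
apply: lscale0 => //; rewrite invr_ge0; apply: addr_ge0; exact: ler01.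
Qed.
Lemma ab_least x z : x <=R z -> - x <=R z -> ab x <=R z. Proof. exact: jleast. Qed.
Lemma abN x : ab (- x) = ab x. Proof. by rewrite /rabs opprK jC. Qed.
Lemma ab_id x : 0 <=R x -> ab x = x.
Proof. move=> h; rewrite /rabs jC jid //; apply: ltr (lopp0 h) h. Qed.
Lemma abD x y : ab (x + y) <=R ab x + ab y.
Proof. apply: ab_least; first by apply: ladd; apply: abx.
by rewrite opprD; apply: ladd; apply: abNx. Qed.
Lemma abZ (a : R) x : 0 <= a -> ab (a *: x) = a *: ab x.
Proof. by move=> ha; rewrite /rabs -scalerN jscale. Qed.
Lemma ab_eq0 x : ab x <=R 0 -> x = 0.
Proof.
move=> h; apply: lanti; first by apply: ltr (abx x) h.
have := ltr (abNx x) h; move/lopp; by rewrite opprK oppr0.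
Qed.
Lemma ps_ab x : ps x <=R ab x. Proof. apply: jleast; [apply: abx|apply: ab0]. Qed.
Lemma ng_ab x : ng x <=R ab x. Proof. apply: jleast; [apply: abNx|apply: ab0]. Qed.
Lemma ab_bound x u : -u <=R x -> x <=R u -> ab x <=R u.
Proof. move=> h1 h2; apply: ab_least => //; by rewrite -[u]opprK; apply: lopp. Qed.
Lemma ab_le x u : ab x <=R u -> x <=R u /\ - u <=R x.
Proof. move=> h; split; first by apply: ltr (abx x) h.
by rewrite -[x]opprK; apply: lopp; apply: ltr (abNx x) h. Qed.

End Basics.


Section Sups.
Context {R : realType} {E : lmodType R} (L : riesz_space E).
Local Notation "x <=R y" := (rle L x y) (at level 70).
Local Notation jn := (rjoin L).
Local Notation mt := (@mt _ _ L).
Local Notation ps := (@ps _ _ L).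
Local Notation ng := (@ng _ _ L).
Local Notation ab := (rabs L).
Context (HD : dedekind_complete L).

Definition supE (S : E -> Prop) : E := epsilon (inhabits 0) (is_sup L S).
Lemma supE_spec S : (exists x, S x) -> (exists u, is_ub L S u) -> is_sup L S (supE S).
Proof. move=> h1 h2; rewrite /supE; apply: epsilon_spec; exact: HD. Qed.

Lemma arch e u : 0 <=R e -> (forall eps : R, 0 < eps -> u <=R eps *: e) -> u <=R 0.
Proof.
move=> he hu.
pose S := fun y => exists n : nat, y = n%:R *: u.
have [] := @HD S; first by exists 0, 0%N; rewrite scale0r.
  exists e => y [n ->]; case: n => [|n]; first by rewrite scale0r.
  have hn : 0 < (n.+1%:R : R) by rewrite ltr0n.
  have hi : 0 < (n.+1%:R : R)^-1 by rewrite invr_gt0.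
  have := lscale (ltW hn) (hu _ hi); by rewrite scalerA mulfV ?scale1r // gt_eqF.
move=> s [hs1 hs2].
have : s <=R s - u.
  apply: hs2 => y [n ->]; apply: lmvr; rewrite -{2}[u]scale1r -scalerDl natr1.
  by apply: hs1; exists n.+1.
exact: lcancel.
Qed.

Lemma nat_directed : directed (fun m n : nat => (m <= n)%N).
Proof.
split; first by exists 0%N.
- by [].
- move=> a b c; exact: leq_trans.
- by move=> a b; exists (maxn a b); rewrite leq_maxl leq_maxr.
Qed.

Lemma mono_conv (x : nat -> E) s :
  (forall n m, (n <= m)%N -> x n <=R x m) ->
  is_sup L (fun y => exists n, y = x n) s -> seq_oconv L x s.
Proof.
move=> hm [hs1 hs2]; exists (fun n => s - x n); split; first split.
- by move=> a b hab; apply: laddl; apply: lopp; apply: hm.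
- split.
    move=> y [a ->]; apply: lsubK; apply: hs1; by exists a.
  move=> u hu.
  have : s <=R s - u.
    apply: hs2 => y [n ->]; apply: lmvr; rewrite addrC; apply: lmvl; apply: hu; by exists n.
  exact: lcancel.
- move=> n; rewrite -abN opprB ab_id; first exact: lrefl.
  by apply: lsubK; apply: hs1; exists n.
Qed.

Lemma inf_add (p q : nat -> E) :
  decr_to0 L (fun m n : nat => (m <= n)%N) p ->
  decr_to0 L (fun m n : nat => (m <= n)%N) q ->
  forall u, (forall n, u <=R p n + q n) -> u <=R 0.
Proof.
move=> [hp1 [_ hp2]] [hq1 [_ hq2]] u hu.
have h1 : forall m, u - q m <=R 0.
  move=> m; apply: hp2 => y [n ->]; apply: lmvs.
  apply: ltr (hu (maxn n m)) _; apply: ladd; [apply: hp1|apply: hq1];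
  by rewrite ?leq_maxl ?leq_maxr.
apply: hq2 => y [m ->]; have := lmvs' (h1 m); by rewrite add0r.
Qed.

Lemma oconv_uniq (x y : nat -> E) a b : (forall n, x n = y n) ->
  seq_oconv L x a -> seq_oconv L y b -> a = b.
Proof.
move=> hxy [p [hp hpx]] [q [hq hqy]].
have h : ab (a - b) <=R 0.
  apply: (inf_add hp hq) => n.
  have -> : a - b = - (x n - a) + (y n - b) by rewrite hxy opprB addrA subrK.
  apply: ltr (abD _ _) _; rewrite abN; apply: ladd; [exact: hpx|exact: hqy].
by apply/eqP; rewrite -subr_eq0 (ab_eq0 h).
Qed.

(* band projection *)
Definition Qp (w z : E) := supE (fun y => exists n : nat, y = mt z (n%:R *: w)).

Section Qw.
Variable w : E.
Hypothesis hw : 0 <=R w.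

Lemma mt0 z c : 0 <=R z -> 0 <=R c -> 0 <=R mt z c.
Proof. by move=> h1 h2; apply: mgreat. Qed.

Lemma Qp_spec z : 0 <=R z -> is_sup L (fun y => exists n : nat, y = mt z (n%:R *: w)) (Qp w z).
Proof.
move=> hz; apply: supE_spec; first by exists (mt z (0%:R *: w)), 0%N.
by exists z => y [n ->]; apply: ml.
Qed.
Lemma Qp_ge z n : 0 <=R z -> mt z (n%:R *: w) <=R Qp w z.
Proof. by move=> hz; case: (Qp_spec hz) => h _; apply: h; exists n. Qed.
Lemma Qp_least z u : 0 <=R z -> (forall n : nat, mt z (n%:R *: w) <=R u) -> Qp w z <=R u.
Proof. by move=> hz h; case: (Qp_spec hz) => _; apply => y [n ->]. Qed.
Lemma Qp_le z : 0 <=R z -> Qp w z <=R z.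
Proof. by move=> hz; apply: Qp_least => // n; apply: ml. Qed.
Lemma Qp_ge0 z : 0 <=R z -> 0 <=R Qp w z.
Proof.
move=> hz; apply: ltr (Qp_ge 0 hz); apply: mt0 => //; by rewrite scale0r; apply: lrefl.
Qed.
Lemma Qp_real z (r : R) : 0 <=R z -> 0 <= r -> mt z (r *: w) <=R Qp w z.
Proof.
move=> hz hr; apply: ltr (Qp_ge (Num.Def.archi_bound r) hz).
apply: mmono; first exact: lrefl.
apply: lscalel => //; exact: ltW (archi_boundP hr).
Qed.
Lemma Qp_mono z z' : 0 <=R z -> z <=R z' -> Qp w z <=R Qp w z'.
Proof.
move=> hz hzz; have hz' := ltr hz hzz.
apply: Qp_least => // n; apply: ltr (Qp_ge n hz'); apply: mmono => //; exact: lrefl.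
Qed.
Lemma Qp_fix z (c : R) : 0 <=R z -> 0 <= c -> z <=R c *: w -> Qp w z = z.
Proof.
move=> hz hc hzc; apply: lanti; first exact: Qp_le.
by have := Qp_real hz hc; rewrite mid.
Qed.
Lemma Qp_disj z : 0 <=R z -> mt z w = 0 -> Qp w z = 0.
Proof.
move=> hz hd; apply: lanti; last exact: Qp_ge0.
apply: Qp_least => // -[|n].
  by rewrite mulr0n scale0r mC mid //; exact: lrefl.
apply: ltr (_ : _ <=R mt (n.+1%:R *: z) (n.+1%:R *: w)) _.
  apply: mmono; last exact: lrefl.
  by rewrite -{1}[z]scale1r; apply: lscalel => //; rewrite ler1n.
by rewrite mscale ?hd ?scaler0 ?ler0n //; apply: lrefl.
Qed.

Lemma mt_subadd a b c : 0 <=R a -> 0 <=R b -> 0 <=R c ->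
  mt (a + b) c <=R mt a c + mt b c.
Proof.
move=> ha hb hc.
have -> : mt a c + mt b c = mt (mt a c + b) (mt a c + c).
  by rewrite ![mt a c + _]addrC madd addrC.
have hac : 0 <=R mt a c by apply: mt0.
apply: mgreat.
  apply: ltr (_ : _ <=R mt (a + b) (c + b)) _.
    apply: mmono; first exact: lrefl.
    by have := laddl c hb; rewrite addr0.
  by rewrite madd addrC; exact: lrefl.
apply: ltr (mr _ _) _.
by have := laddr c hac; rewrite add0r.
Qed.

Lemma nw0 (n : nat) : 0 <=R n%:R *: w.
Proof. by apply: lscale0 => //; rewrite ler0n. Qed.

Lemma Qp_add a b : 0 <=R a -> 0 <=R b -> Qp w (a + b) = Qp w a + Qp w b.
Proof.
move=> ha hb; have hab : 0 <=R a + b by have := ladd ha hb; rewrite addr0.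
apply: lanti.
  apply: Qp_least => // n; apply: ltr (mt_subadd ha hb (nw0 n)) _.
  by apply: ladd; apply: Qp_ge.
have key : forall n m : nat, mt a (n%:R *: w) + mt b (m%:R *: w) <=R Qp w (a + b).
  move=> n m; apply: ltr (Qp_ge (n + m) hab); apply: mgreat.
    by apply: ladd; apply: ml.
  by rewrite natrD scalerDl; apply: ladd; apply: mr.
have h1 : forall m : nat, Qp w a <=R Qp w (a + b) - mt b (m%:R *: w).
  by move=> m; apply: Qp_least => // n; apply: lmvr.
have h2 : Qp w b <=R Qp w (a + b) - Qp w a.
  apply: Qp_least => // m; apply: lmvr; rewrite addrC; apply: lmvl; exact: h1.
by rewrite addrC; apply: lmvl.
Qed.

Lemma Qp0 : Qp w 0 = 0.
Proof. by apply: lanti; [apply: Qp_le; apply: lrefl|apply: Qp_ge0; apply: lrefl]. Qed.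

Lemma Qp_scale_le (t : R) z : 0 < t -> 0 <=R z -> Qp w (t *: z) <=R t *: Qp w z.
Proof.
move=> ht hz; have htz : 0 <=R t *: z by apply: lscale0 => //; exact: ltW.
apply: Qp_least => // n.
have -> : n%:R *: w = t *: ((n%:R / t) *: w).
  by rewrite scalerA mulrCA mulfV ?mulr1 // gt_eqF.
rewrite mscale; last exact: ltW.
apply: lscale; first exact: ltW.
by apply: Qp_real => //; apply: divr_ge0; [rewrite ler0n|exact: ltW].
Qed.

Lemma Qp_scale (t : R) z : 0 <= t -> 0 <=R z -> Qp w (t *: z) = t *: Qp w z.
Proof.
move=> ht hz; have [->|t0] := eqVneq t 0; first by rewrite !scale0r Qp0.
have htp : 0 < t by rewrite lt_def t0.
apply: lanti; first exact: Qp_scale_le.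
have hti : 0 < t^-1 by rewrite invr_gt0.
have htz : 0 <=R t *: z by apply: lscale0.
have := Qp_scale_le hti htz; rewrite scalerA mulVf // scale1r => h.
by have := lscale ht h; rewrite scalerA mulfV // scale1r.
Qed.

Definition Q (x : E) := Qp w (ps x) - Qp w (ng x).

Lemma addr_eq_sub (x y a b : E) : x + b = y + a -> x - y = a - b.
Proof. move=> h; have -> : x = y + a - b by rewrite -h addrK.
by rewrite addrAC [y + a - y]addrAC subrr add0r. Qed.

Lemma Q_dec a b : 0 <=R a -> 0 <=R b -> Q (a - b) = Qp w a - Qp w b.
Proof.
move=> ha hb; rewrite /Q; apply: addr_eq_sub.
rewrite -(Qp_add (ps0 (a - b)) hb) -(Qp_add (ng0 (a - b)) ha).
congr (Qp w _).
have := psng (a - b); set P := ps _; set N := ng _ => h.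
by rewrite -[P](subrK N) h addrAC subrK addrC.
Qed.

Lemma Q_pos z : 0 <=R z -> Q z = Qp w z.
Proof. by move=> hz; rewrite -[z]subr0 Q_dec ?Qp0 ?subr0 //; apply: lrefl. Qed.

Lemma Q_add x y : Q (x + y) = Q x + Q y.
Proof.
have -> : x + y = (ps x + ps y) - (ng x + ng y).
  by rewrite opprD addrACA !psng.
rewrite Q_dec; last by have := ladd (ng0 x) (ng0 y); rewrite addr0.
  by rewrite (Qp_add (ps0 x) (ps0 y)) (Qp_add (ng0 x) (ng0 y)) /Q opprD addrACA.
by have := ladd (ps0 x) (ps0 y); rewrite addr0.
Qed.

Lemma Q_opp x : Q (- x) = - Q x.
Proof. by rewrite /Q psN ngN opprB. Qed.

Lemma Q_sub x y : Q (x - y) = Q x - Q y.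
Proof. by rewrite Q_add Q_opp. Qed.

Lemma Q0 : Q 0 = 0.
Proof. by have := Q_sub 0 0; rewrite !subrr. Qed.

Lemma Q_scale (t : R) x : Q (t *: x) = t *: Q x.
Proof.
wlog ht : t x / 0 <= t.
  move=> h; case: (lerP 0 t) => [/h //|ht].
  have -> : t *: x = (- t) *: (- x) by rewrite scaleNr scalerN opprK.
  by rewrite h ?oppr_ge0 ?ltW // Q_opp scaleNr scalerN opprK.
have -> : t *: x = t *: ps x - t *: ng x by rewrite -scalerBr psng.
rewrite Q_dec; [|by apply: lscale0 => //; apply: ps0|by apply: lscale0 => //; apply: ng0].
by rewrite (Qp_scale ht (ps0 x)) (Qp_scale ht (ng0 x)) -scalerBr.
Qed.

Lemma Q_mono x y : x <=R y -> Q x <=R Q y.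
Proof.
move=> h; apply: lsubK'; rewrite -Q_sub Q_pos; first exact: Qp_ge0 (lsubK h).
exact: lsubK.
Qed.

Lemma Q_ge0 z : 0 <=R z -> 0 <=R Q z.
Proof. by move=> h; rewrite -Q0; apply: Q_mono. Qed.

Lemma Q_le z : 0 <=R z -> Q z <=R z.
Proof. by move=> h; rewrite Q_pos //; apply: Qp_le. Qed.

Lemma Q_idem z : 0 <=R z -> Q (Q z) = Q z.
Proof.
move=> hz; have hq := Q_ge0 hz; rewrite (Q_pos hq) Q_pos //.
apply: lanti; first by apply: Qp_le; rewrite -Q_pos.
apply: Qp_least => // n.
have h0 : 0 <=R mt z (n%:R *: w) by apply: mt0 => //; apply: nw0.
rewrite -(@Qp_fix (mt z (n%:R *: w)) n%:R) ?ler0n //; last exact: mr.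
by apply: Qp_mono => //; apply: Qp_ge.
Qed.

End Qw.
End Sups.


Section C.
Context {R : realType} {E : lmodType R} (L : riesz_space E).
Local Notation "x <=R y" := (rle L x y) (at level 70).
Local Notation jn := (rjoin L).
Local Notation mt := (@mt _ _ L).
Local Notation ps := (@ps _ _ L).
Local Notation ng := (@ng _ _ L).
Local Notation ab := (rabs L).
Local Notation Qp := (@Qp _ _ L).
Local Notation Q := (@Q _ _ L).
Context (HD : dedekind_complete L).

Lemma Qp_monow w w' z : 0 <=R w -> w <=R w' -> 0 <=R z -> Qp w z <=R Qp w' z.
Proof.
move=> hw hww hz; have hw' := ltr hw hww.
apply: (Qp_least HD hz) => n; apply: ltr (Qp_ge HD w' n hz).
apply: mmono; first exact: lrefl.
by apply: lscale => //; rewrite ler0n.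
Qed.

Lemma Q_monow w w' z : 0 <=R w -> w <=R w' -> 0 <=R z -> Q w z <=R Q w' z.
Proof.
move=> hw hww hz; have hw' := ltr hw hww.
rewrite (Q_pos HD hw hz) (Q_pos HD hw' hz); exact: Qp_monow.
Qed.

Lemma Q_self z : Q (ps z) z = ps z.
Proof.
have hw := @ps0 _ _ L z.
rewrite -{2}[z](@psng _ _ L z) (Q_dec HD hw (@ps0 _ _ L z) (@ng0 _ _ L z)).
rewrite (@Qp_fix _ _ L HD (ps z) hw (ps z) 1) //; last by rewrite scale1r; apply: lrefl.
by rewrite (Qp_disj HD (@ng0 _ _ L z)) ?subr0 // mC psngm.
Qed.

Section Comm.
Variables (Tj : E -> E) (hlin : is_linear Tj) (hpos : positive_op L Tj)
  (hid : forall x, Tj (Tj x) = Tj x) (hrs : riesz_subspace L (range Tj)).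

Lemma TD x y : Tj (x + y) = Tj x + Tj y.
Proof. by have := hlin 1 x y; rewrite !scale1r. Qed.
Lemma T0 : Tj 0 = 0.
Proof. have := TD 0 0; rewrite addr0 => h; apply: (@addrI _ (Tj 0)); by rewrite -h addr0. Qed.
Lemma TZ (a : R) x : Tj (a *: x) = a *: Tj x.
Proof. by have := hlin a x 0; rewrite !addr0 T0 addr0. Qed.
Lemma TN x : Tj (- x) = - Tj x.
Proof. by rewrite -scaleN1r TZ scaleN1r. Qed.
Lemma TB x y : Tj (x - y) = Tj x - Tj y.
Proof. by rewrite TD TN. Qed.
Lemma Tmono x y : x <=R y -> Tj x <=R Tj y.
Proof. by move=> h; apply: lsubK'; rewrite -TB; apply: hpos; apply: lsubK. Qed.
Lemma Tsum (I : Type) (r : seq I) (P : pred I) (F : I -> E) :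
  Tj (\sum_(i <- r | P i) F i) = \sum_(i <- r | P i) Tj (F i).
Proof.
elim: r => [|a r IH]; first by rewrite !big_nil T0.
by rewrite !big_cons; case: ifP => _ //; rewrite TD IH.
Qed.
Lemma Tab x : ab (Tj x) <=R Tj (ab x).
Proof. apply: ab_least; first by apply: Tmono; apply: abx.
by rewrite -TN; apply: Tmono; apply: abNx. Qed.

Lemma rg_fix x : range Tj x -> Tj x = x.
Proof. by case=> y <-; rewrite hid. Qed.
Lemma fix_rg x : Tj x = x -> range Tj x.
Proof. by move=> h; exists x. Qed.
Lemma rg_add x y : range Tj x -> range Tj y -> range Tj (x + y).
Proof. by case: hrs => _ h _ _; apply: h. Qed.
Lemma rg_scale (a : R) x : range Tj x -> range Tj (a *: x).
Proof. by case: hrs => _ _ h _; apply: h. Qed.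
Lemma rg_join x y : range Tj x -> range Tj y -> range Tj (jn x y).
Proof. by case: hrs => _ _ _ h; apply: h. Qed.
Lemma rg0 : range Tj 0.
Proof. by case: hrs. Qed.
Lemma rg_opp x : range Tj x -> range Tj (- x).
Proof. by move=> h; rewrite -scaleN1r; apply: rg_scale. Qed.
Lemma rg_sub x y : range Tj x -> range Tj y -> range Tj (x - y).
Proof. by move=> h1 h2; apply: rg_add => //; apply: rg_opp. Qed.
Lemma rg_mt x y : range Tj x -> range Tj y -> range Tj (mt x y).
Proof. by move=> h1 h2; apply: rg_opp; apply: rg_join; apply: rg_opp. Qed.
Lemma rg_ps x : range Tj x -> range Tj (ps x).
Proof. by move=> h; apply: rg_join => //; apply: rg0. Qed.
Lemma rg_sum (I : Type) (r : seq I) (P : pred I) (F : I -> E) :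
  (forall i, P i -> range Tj (F i)) -> range Tj (\sum_(i <- r | P i) F i).
Proof.
move=> h; elim: r => [|a r IH]; first by rewrite big_nil; apply: rg0.
by rewrite big_cons; case: ifP => // Pa; apply: rg_add => //; apply: h.
Qed.

Variable hoc : order_continuous L Tj.
Variables (e w : E) (he : 0 <=R e) (hTe : Tj e = e) (hw : 0 <=R w) (hwr : range Tj w).

Lemma Qe_fix : Tj (Q w e) = Q w e.
Proof.
rewrite (Q_pos HD hw he).
pose x := fun n : nat => mt e (n%:R *: w).
have hc : seq_oconv L x (Qp w e).
  apply: mono_conv; last exact: Qp_spec.
  move=> n m hnm; apply: mmono; first exact: lrefl.
  by apply: lscalel => //; rewrite ler_nat.
have hc' := hoc nat_directed hc.
apply: (oconv_uniq _ hc' hc) => n.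
apply: rg_fix; apply: rg_mt; first by apply: fix_rg.
by apply: rg_scale.
Qed.

Lemma comm_pos x (M : R) : 0 <=R x -> x <=R M *: e -> Tj (Q w x) = Q w (Tj x).
Proof.
move=> hx hxM.
set q := Q w e.
have hq : Tj q = q := Qe_fix.
have IQmono : forall a b, a <=R b -> a - Q w a <=R b - Q w b.
  move=> a b hab; apply: lsubK'.
  have -> : b - Q w b - (a - Q w a) = (b - a) - (Q w b - Q w a).
    by rewrite !opprD !opprK addrACA.
  rewrite -(Q_sub HD hw).
  by apply: lsubK; apply: (Q_le HD hw); apply: lsubK.
have hqq : q - Q w q = 0 by rewrite /q (Q_idem HD hw he) subrr.
have hQx0 : 0 <=R Q w x := Q_ge0 HD hw hx.
have hTQx0 : 0 <=R Tj (Q w x) := hpos hQx0.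
have s2 : Tj (Q w x) = Q w (Tj (Q w x)).
  have h1 : Tj (Q w x) <=R M *: q.
    rewrite -hq -TZ; apply: Tmono.
    by rewrite -(Q_scale HD hw); apply: (Q_mono HD hw).
  have h2 := IQmono _ _ h1.
  rewrite (Q_scale HD hw) -scalerBr hqq scaler0 in h2.
  have h3 : 0 <=R Tj (Q w x) - Q w (Tj (Q w x)) by apply: lsubK; apply: (Q_le HD hw).
  have := lanti h2 h3; move/eqP; rewrite subr_eq0 => /eqP.
  done.
set y := x - Q w x.
have hy0 : 0 <=R y by apply: lsubK; apply: (Q_le HD hw).
have hQy : Q w y = 0 by rewrite /y (Q_sub HD hw) (Q_idem HD hw hx) subrr.
have hyM : y <=R M *: (e - q).
  have := IQmono _ _ hxM; rewrite (Q_scale HD hw) -scalerBr -/q.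
  by rewrite -/y.
have hTy : Tj y <=R M *: (e - q).
  by apply: ltr (Tmono hyM) _; rewrite TZ TB hTe hq; exact: lrefl.
have s3 : Q w (Tj y) = 0.
  apply: lanti; last by apply: (Q_ge0 HD hw); apply: hpos.
  have := Q_mono HD hw hTy; rewrite (Q_scale HD hw) (Q_sub HD hw) -/q.
  by rewrite hqq scaler0.
have hx' : x = Q w x + y by rewrite /y addrC subrK.
by rewrite {2}hx' TD (Q_add HD hw) s3 addr0 -s2.
Qed.

Lemma comm x (M : R) : ab x <=R M *: e -> Tj (Q w x) = Q w (Tj x).
Proof.
move=> h.
have h1 := comm_pos (M := M) (@ps0 _ _ L x) (ltr (ps_ab x) h).
have h2 := comm_pos (M := M) (@ng0 _ _ L x) (ltr (ng_ab x) h).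
have hx : x = ps x - ng x by rewrite psng.
rewrite hx (Q_sub HD hw) TB h1 h2 -(Q_sub HD hw) -TB.
by [].
Qed.

End Comm.
End C.


Section Vid.
Context {R : realType} {E : lmodType R}.

Lemma lin3 (S g e : E) (a b c a' b' c' : R) :
  a = a' -> b = b' -> c = c' -> a *: S + b *: g + c *: e = a' *: S + b' *: g + c' *: e.
Proof. by move=> -> -> ->. Qed.

Lemma FD_gen (S g e : E) (a b c a' b' c' : R) :
  (a *: S + b *: g + c *: e) + (a' *: S + b' *: g + c' *: e) =
  (a + a') *: S + (b + b') *: g + (c + c') *: e.
Proof. by rewrite !scalerDl addrACA [X in X + _ = _]addrACA. Qed.

Ltac lin3tac S g e :=
  let F := fresh "F" in
  let FD := fresh "FD" in let FN := fresh "FN" in let FZ := fresh "FZ" in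
  let hS := fresh "hS" in let hg := fresh "hg" in let he := fresh "he" in
  pose F := fun a b c : R => a *: S + b *: g + c *: e;
  assert (FD : forall a b c a' b' c', F a b c + F a' b' c' = F (a + a') (b + b') (c + c'))
    by (move=> *; rewrite /F FD_gen; reflexivity);
  assert (FN : forall a b c, - F a b c = F (- a) (- b) (- c))
    by (move=> *; rewrite /F !scaleNr !opprD; reflexivity);
  assert (FZ : forall t a b c, t *: F a b c = F (t * a) (t * b) (t * c))
    by (move=> *; rewrite /F !scalerDr !scalerA; reflexivity);
  assert (hS : S = F 1 0 0) by (rewrite /F scale1r !scale0r !addr0; reflexivity);
  assert (hg : g = F 0 1 0) by (rewrite /F scale1r !scale0r addr0 add0r; reflexivity);
  assert (he : e = F 0 0 1) by (rewrite /F scale1r !scale0r !add0r; reflexivity);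
  rewrite hS hg he; rewrite !(FD, FN, FZ); congr F.

Lemma vid1 (S g e : E) (ki kj a M C : R) :
  (2 * ki) *: S - (ki ^+ 2) *: e + (2 * ki) *: g + C *: e - ((2 * kj) *: (S + g) - (kj ^+ 2) *: e)
  = (2 * (kj - ki)) *: (a *: e - S) + (2 * (kj - ki)) *: (M *: e - g)
    + (kj ^+ 2 - ki ^+ 2 - 2 * (kj - ki) * a - 2 * (kj - ki) * M + C) *: e.
Proof. lin3tac S g e; ring. Qed.

Lemma vid2 (S g e : E) (ki kj a M C : R) :
  (2 * ki) *: S - (ki ^+ 2) *: e + (2 * ki) *: g + C *: e - ((2 * kj) *: (S + g) - (kj ^+ 2) *: e)
  = (2 * (ki - kj)) *: (S - a *: e) + (2 * (ki - kj)) *: (g + M *: e)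
    + (kj ^+ 2 - ki ^+ 2 + 2 * (ki - kj) * a - 2 * (ki - kj) * M + C) *: e.
Proof. lin3tac S g e; ring. Qed.

Lemma vid0 (S g e : E) (ki C : R) :
  (2 * ki) *: S - (ki ^+ 2) *: e + (2 * ki) *: g + C *: e - ((2 * ki) *: (S + g) - (ki ^+ 2) *: e)
  = C *: e.
Proof. lin3tac S g e; ring. Qed.

End Vid.

Lemma zid1 (V : zmodType) (a G c p : V) : a + G + c - p = (a + c - p) + G.
Proof. rewrite -!addrA; congr (_ + _); by rewrite addrC -addrA. Qed.
Lemma zid2 (V : zmodType) (a c p s t : V) : (a + c - p) + t = (a - s) + (s + t + c - p).
Proof. rewrite -!addrA addKr; congr (_ + _); by rewrite [RHS]addrC -addrA. Qed.

Section Pot.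
Context {R : realType} {E : lmodType R} (L : riesz_space E).
Local Notation "x <=R y" := (rle L x y) (at level 70).
Local Notation jn := (rjoin L).
Local Notation mt := (@mt _ _ L).
Local Notation ps := (@ps _ _ L).
Local Notation ng := (@ng _ _ L).
Local Notation ab := (rabs L).
Local Notation Qp := (@Qp _ _ L).
Local Notation Q := (@Q _ _ L).
Context (HD : dedekind_complete L).
Variables (e : E) (he : 0 <=R e) (K : nat).

Definition kk (i : nat) : R := i%:R - K%:R.
Definition phi (x : E) (i : nat) := (2 * kk i) *: x - (kk i ^+ 2) *: e.
Definition Phi (x : E) := supE L (fun y => exists i, (i <= K.*2)%N /\ y = phi x i).

Lemma scale_le_abs (c : R) x : c *: x <=R `|c| *: ab x.
Proof.
case: (lerP 0 c) => hc.
  by rewrite ger0_norm //; apply: lscale => //; apply: abx.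
rewrite ltr0_norm //; have -> : c *: x = (- c) *: (- x) by rewrite scaleNr scalerN opprK.
apply: lscale; first by rewrite oppr_ge0 ltW.
exact: abNx.
Qed.

Lemma kk_bound i : (i <= K.*2)%N -> `|kk i| <= K%:R.
Proof.
move=> h; have : (i%:R : R) <= (K.*2)%:R by rewrite ler_nat.
rewrite -muln2 natrM /kk => h2; have h0 : (0 : R) <= i%:R by rewrite ler0n.
rewrite ler_norml; apply/andP; split; lra.
Qed.

Lemma Phi_spec x : is_sup L (fun y => exists i, (i <= K.*2)%N /\ y = phi x i) (Phi x).
Proof.
apply: supE_spec => //; first by exists (phi x 0), 0%N.
exists ((2 * K%:R) *: ab x) => y [i [hi ->]].
rewrite /phi; apply: ltr (_ : _ <=R (2 * kk i) *: x) _.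
  apply: lmvs; rewrite -{1}[(2 * kk i) *: x]addr0; apply: laddl.
  by apply: lscale0; [apply: sqr_ge0|].
apply: ltr (scale_le_abs _ _) _; apply: lscalel; last exact: ab0.
rewrite normrM ger0_norm //; apply: ler_wpM2l => //; exact: kk_bound.
Qed.

Lemma Phi_ge x i : (i <= K.*2)%N -> phi x i <=R Phi x.
Proof. by move=> hi; case: (Phi_spec x) => h _; apply: h; exists i. Qed.
Lemma Phi_least x u : (forall i, (i <= K.*2)%N -> phi x i <=R u) -> Phi x <=R u.
Proof. by move=> h; case: (Phi_spec x) => _; apply => y [i [hi ->]]; apply: h. Qed.

Lemma Phi0 : Phi 0 <=R 0.
Proof.
apply: Phi_least => i _; rewrite /phi scaler0 add0r; apply: lopp0.
by apply: lscale0; [apply: sqr_ge0|].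
Qed.

Lemma Phi_abs x : (2 * K%:R) *: ab x <=R Phi x + (K%:R ^+ 2) *: e.
Proof.
rewrite -abZ; last by rewrite mulr_ge0 ?ler0n.
apply: ab_least.
  apply: lmvs'; have := Phi_ge x (leqnn K.*2); rewrite /phi /kk -muln2 natrM.
  by have -> : (K%:R * 2 - K%:R : R) = K%:R by ring.
rewrite -scalerN; apply: lmvs'; have := Phi_ge x (leq0n K.*2); rewrite /phi /kk.
have -> : (0%:R - K%:R : R) = - K%:R by rewrite sub0r.
by rewrite sqrrN mulrN scaleNr scalerN.
Qed.


Variables (Tj : E -> E) (hlin : is_linear Tj) (hpos : positive_op L Tj)
  (hid : forall x, Tj (Tj x) = Tj x) (hrs : riesz_subspace L (range Tj))
  (hoc : order_continuous L Tj) (hTje : Tj e = e).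
Variables (S : E) (hSr : range Tj S).

Definition aa (i : nat) : R := kk i - 2^-1.
Definition wv (i : nat) := ps (S - aa i *: e).
Definition Qi (i : nat) (x : E) :=
  if i == 0%N then x else if (K.*2 < i)%N then 0 else Q (wv i) x.
Definition Pi (i : nat) (x : E) := Qi i x - Qi i.+1 x.

Lemma wv0 i : 0 <=R wv i. Proof. exact: ps0. Qed.
Lemma wv_rg i : range Tj (wv i).
Proof.
apply: (rg_ps hrs); apply: (rg_sub hrs) => //; apply: (rg_scale hrs); exact: fix_rg.
Qed.

Lemma Qi_add i x y : Qi i (x + y) = Qi i x + Qi i y.
Proof. rewrite /Qi; case: eqP => // _; case: ifP => _; [by rewrite addr0|exact: (Q_add HD (wv0 i))]. Qed.
Lemma Qi_scale i (t : R) x : Qi i (t *: x) = t *: Qi i x.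
Proof. rewrite /Qi; case: eqP => // _; case: ifP => _; [by rewrite scaler0|exact: (Q_scale HD (wv0 i))]. Qed.
Lemma Qi_opp i x : Qi i (- x) = - Qi i x.
Proof. by rewrite -scaleN1r Qi_scale scaleN1r. Qed.
Lemma Qi_pos i x : 0 <=R x -> 0 <=R Qi i x.
Proof. rewrite /Qi; case: eqP => // _; case: ifP => _ h; [exact: lrefl|exact: (Q_ge0 HD (wv0 i) h)]. Qed.
Lemma Qi_mono i x y : x <=R y -> Qi i x <=R Qi i y.
Proof.
move=> h; apply: lsubK'; rewrite -Qi_opp -Qi_add; apply: Qi_pos; exact: lsubK.
Qed.
Lemma Qi_dec i x : 0 <=R x -> Qi i.+1 x <=R Qi i x.
Proof.
move=> hx; rewrite {1}/Qi /=; case: ifP => hi; first exact: Qi_pos.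
rewrite /Qi; case: eqP => [->|i0]; first exact: (Q_le HD (wv0 1) hx).
rewrite ifF; last by move/negbT: hi => hi; apply/negbTE; lia.
apply: (Q_monow HD) => //; first exact: wv0.
apply: jmono; last exact: lrefl.
apply: laddl; apply: lopp; apply: lscalel => //.
by rewrite /aa /kk -natr1; lra.
Qed.

Lemma Pi_add i x y : Pi i (x + y) = Pi i x + Pi i y.
Proof. by rewrite /Pi !Qi_add opprD addrACA. Qed.
Lemma Pi_scale i (t : R) x : Pi i (t *: x) = t *: Pi i x.
Proof. by rewrite /Pi !Qi_scale scalerBr. Qed.
Lemma Pi_opp i x : Pi i (- x) = - Pi i x.
Proof. by rewrite -scaleN1r Pi_scale scaleN1r. Qed.
Lemma Pi_sub i x y : Pi i (x - y) = Pi i x - Pi i y.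
Proof. by rewrite Pi_add Pi_opp. Qed.
Lemma Pi0 i : Pi i 0 = 0.
Proof. by have := Pi_sub i 0 0; rewrite !subrr. Qed.
Lemma Pi_pos i x : 0 <=R x -> 0 <=R Pi i x.
Proof. by move=> hx; apply: lsubK; apply: Qi_dec. Qed.
Lemma Pi_mono i x y : x <=R y -> Pi i x <=R Pi i y.
Proof. move=> h; apply: lsubK'; rewrite -Pi_sub; apply: Pi_pos; exact: lsubK. Qed.

Lemma partition x : \sum_(0 <= i < K.*2.+1) Pi i x = x.
Proof.
have := @telescope_sumr _ 0 K.*2.+1 (fun i => - Qi i x) (leq0n _).
rewrite /Pi; under eq_bigr do rewrite opprK addrC.
move=> ->; rewrite opprK /Qi /= ltnSn oppr0 add0r.
by [].
Qed.

Lemma Qi_le i x : 0 <=R x -> Qi i x <=R x.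
Proof. rewrite /Qi; case: eqP => _ h; first exact: lrefl.
case: ifP => _; [exact: h|exact: (Q_le HD (wv0 i) h)]. Qed.

Lemma kkS i : kk i.+1 = kk i + 1.
Proof. by rewrite /kk -natr1; ring. Qed.

Lemma P_low i : (0 < i)%N -> (i <= K.*2)%N -> 0 <=R Pi i (S - aa i *: e).
Proof.
move=> h1 h2; set z := S - aa i *: e; rewrite /Pi.
have -> : Qi i z = ps z.
  rewrite /Qi ifF; last by apply/negbTE; rewrite -lt0n.
  by rewrite ifF ?(Q_self HD) //; apply/negbTE; rewrite -leqNgt.
apply: lsubK; apply: ltr (Qi_mono _ (jl z 0)) _; apply: Qi_le; exact: ps0.
Qed.

Lemma P_up i : (i < K.*2)%N -> Pi i (S - aa i.+1 *: e) <=R 0.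
Proof.
move=> h1; set z := S - aa i.+1 *: e; rewrite /Pi.
have -> : Qi i.+1 z = ps z.
  by rewrite /Qi /= ifF ?(Q_self HD) //; apply/negbTE; rewrite -leqNgt.
apply: lsub_le0; apply: ltr (Qi_mono _ (jl z 0)) _; apply: Qi_le; exact: ps0.
Qed.

Lemma Qi_comm i x (M : R) : ab x <=R M *: e -> Tj (Qi i x) = Qi i (Tj x).
Proof.
move=> h; rewrite /Qi; case: eqP => // _; case: ifP => _; first exact: T0.
exact: (comm HD hlin hpos hid hrs hoc he hTje (wv0 i) (wv_rg i) h).
Qed.

Lemma Pi_comm i x (M : R) : ab x <=R M *: e -> Tj (Pi i x) = Pi i (Tj x).
Proof. by move=> h; rewrite /Pi (TB hlin) (Qi_comm i h) (Qi_comm i.+1 h). Qed.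

Variables (g : E) (M : R) (hM : 0 <= M) (hg : ab g <=R M *: e).
Definition CC : R := (1 + 2 * M) ^+ 2.
Definition GG := \sum_(0 <= i < K.*2.+1) (2 * kk i) *: Pi i g.

Lemma coef_ok (d : R) : 0 <= d ^+ 2 - d - 2 * d * M + CC.
Proof. rewrite /CC; have h1 := sqr_ge0 (d - (1 + 2 * M) / 2); have h2 := sqr_ge0 (1 + 2 * M); nra. Qed.

Lemma main_ineq : Phi (S + g) <=R Phi S + GG + CC *: e.
Proof.
have [hg1 hg2] := ab_le hg.
apply: Phi_least => j hj; apply: lsubK'.
pose W := Phi S + CC *: e - phi (S + g) j.
have -> : Phi S + GG + CC *: e - phi (S + g) j =
    \sum_(0 <= i < K.*2.+1) Pi i (W + (2 * kk i) *: g).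
  under eq_bigr do rewrite Pi_add Pi_scale.
  by rewrite big_split /= partition /W zid1.
apply: lsum0_nat => i hi; have hi2 : (i <= K.*2)%N by [].
have -> : W + (2 * kk i) *: g = (Phi S - phi S i) +
    (phi S i + (2 * kk i) *: g + CC *: e - phi (S + g) j).
  by rewrite /W (zid2 _ _ _ (phi S i)).
rewrite Pi_add; apply: ladd0; first by apply: Pi_pos; apply: lsubK; apply: Phi_ge.
rewrite /phi; case: (ltngtP i j) => hij.
- have hd : 1 <= kk j - kk i.
    have : (i.+1%:R : R) <= j%:R by rewrite ler_nat.
    by rewrite /kk -natr1; lra.
  have hij2 : (i < K.*2)%N by apply: leq_trans hij hj.
  rewrite (vid1 _ _ _ _ _ (aa i.+1) M) !Pi_add !Pi_scale; apply: ladd0; first apply: ladd0.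
  + apply: lscale0; first lra.
    rewrite -opprB Pi_opp; apply: lopp0'; exact: P_up.
  + apply: lscale0; first lra.
    by apply: Pi_pos; apply: lsubK.
  + apply: lscale0; last exact: Pi_pos.
    have -> : kk j ^+ 2 - kk i ^+ 2 - 2 * (kk j - kk i) * aa i.+1 - 2 * (kk j - kk i) * M + CC
      = (kk j - kk i) ^+ 2 - (kk j - kk i) - 2 * (kk j - kk i) * M + CC.
      by rewrite /aa kkS; field.
    exact: coef_ok.
- have hd : 1 <= kk i - kk j.
    have : (j.+1%:R : R) <= i%:R by rewrite ler_nat.
    by rewrite /kk -natr1; lra.
  have hi1 : (0 < i)%N by apply: leq_ltn_trans hij.
  rewrite (vid2 _ _ _ _ _ (aa i) M) !Pi_add !Pi_scale; apply: ladd0; first apply: ladd0.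
  + apply: lscale0; first lra.
    exact: P_low.
  + apply: lscale0; first lra.
    apply: Pi_pos; have := lsubK hg2; by rewrite opprK.
  + apply: lscale0; last exact: Pi_pos.
    have -> : kk j ^+ 2 - kk i ^+ 2 + 2 * (kk i - kk j) * aa i - 2 * (kk i - kk j) * M + CC
      = (kk i - kk j) ^+ 2 - (kk i - kk j) - 2 * (kk i - kk j) * M + CC.
      by rewrite /aa; field.
    exact: coef_ok.
- rewrite hij vid0 Pi_scale; apply: lscale0; last by apply: Pi_pos.
  rewrite /CC; exact: sqr_ge0.
Qed.

Variables (T : E -> E) (Tlin : is_linear T) (Tpos : positive_op L T)
  (hcomp : forall x, T (Tj x) = T x) (hTe : T e = e) (hTg : Tj g = 0).

Lemma Tstep : T (Phi (S + g)) <=R T (Phi S) + CC *: e.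
Proof.
apply: ltr (Tmono Tlin Tpos main_ineq) _.
have TG : T GG = 0.
  rewrite /GG (Tsum Tlin) big1 // => i _.
  by rewrite (TZ Tlin) -hcomp (Pi_comm i hg) hTg Pi0 (T0 Tlin) scaler0.
rewrite !(TD Tlin) TG addr0 (TZ Tlin) hTe; exact: lrefl.
Qed.
End Pot.


Unset Implicit Arguments.
Theorem lemma4p1 (R : realType) (E : lmodType R) (L : riesz_space E)
  (HD : dedekind_complete L)
  (T : E -> E) (HT : cond_exp L T)
  (e : E) (He : weak_order_unit L e) (HTe : T e = e)
  (Ti : nat -> E -> E) (HF : filtration L Ti) (Hcomp : compatible T Ti)
  (f : nat -> E) (Hadapt : forall i, range (Ti i) (f i))
  (B : R) (HB0 : 0 < B) (HB : forall i, rle L (rabs L (f i)) (B *: e)) :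
  let g := fun i : nat => f i - Ti i.-1 (f i) in
  ((forall i, (0 < i)%N -> range (Ti i) (g i)) /\
   (forall i, Ti i (g i.+1) = 0)) /\
  seq_oconv L
    (fun n : nat => T (rabs L ((n.+1)%:R^-1 *: \sum_(1 <= i < n.+2) g i))) 0.
Proof.
move=> g.
case: HT => Tlin Tpos Toc Tid [_ Trs _].
case: HF => HFi HFc.
have he : rle L 0 e by case: He.
have Tie : forall i, Ti i e = e by move=> i; rewrite -{1}HTe (Hcomp i e).1 HTe.
have Tih : forall i, [/\ is_linear (Ti i), positive_op L (Ti i), order_continuous L (Ti i),
    (forall x, Ti i (Ti i x) = Ti i x) & riesz_subspace L (range (Ti i))].
  by move=> i; case: (HFi i) => h1 h2 h3 h4 [_ h5 _].
have incl : forall i j x, (i <= j)%N -> range (Ti i) x -> range (Ti j) x.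
  move=> i j x hij [y <-]; apply: fix_rg; exact: (HFc i j hij y).2.
have hg1 : forall i, (0 < i)%N -> range (Ti i) (g i).
  move=> i hi; case: (Tih i) => _ _ _ hid hrs.
  apply: (rg_sub hrs); first exact: Hadapt.
  apply: fix_rg; apply: (HFc i.-1 i _ (f i)).2; exact: leq_pred.
have hg2 : forall i, Ti i (g i.+1) = 0.
  move=> i; case: (Tih i) => hlin _ _ hid _.
  by rewrite /g /= (TB hlin) hid subrr.
split; first by split.
pose M := 2 * B.
have hgb : forall i, rle L (rabs L (g i)) (M *: e).
  move=> i; case: (Tih i.-1) => hlin hpos _ _ _.
  apply: ltr (abD _ _) _; rewrite abN.
  have -> : M *: e = B *: e + B *: e by rewrite /M -scalerDl; congr (_ *: _); ring.
  apply: ladd; first exact: HB.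
  apply: ltr (Tab hlin hpos _) _; apply: ltr (Tmono hlin hpos (HB i)) _.
  rewrite (TZ hlin) Tie; exact: lrefl.
pose Sm m := \sum_(1 <= i < m.+1) g i.
have hSr : forall m, range (Ti m) (Sm m).
  move=> m; case: (Tih m) => _ _ _ _ hrs; rewrite /Sm big_nat_cond.
  apply: (rg_sum hrs) => i /andP [/andP [h1 h2] _]; apply: (incl i); first by lia.
  exact: hg1.
have hS0 : Sm 0%N = 0 by rewrite /Sm big_geq.
have hSS : forall m, Sm m.+1 = Sm m + g m.+1 by move=> m; rewrite /Sm big_nat_recr.
have Tphi : forall K m, rle L (T (Phi L e K (Sm m))) ((m%:R * CC M) *: e).
  move=> K; elim=> [|m IH].
    rewrite hS0 mul0r scale0r; have := Tmono Tlin Tpos (Phi0 HD he K); by rewrite (T0 Tlin).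
  rewrite hSS; case: (Tih m) => hlin hpos hoc hid hrs.
  apply: ltr (Tstep HD he K hlin hpos hid hrs hoc (Tie m) (hSr m) (hgb m.+1) Tlin Tpos
     (fun x => (Hcomp m x).2) HTe (hg2 m)) _.
  rewrite -natr1 mulrDl mul1r scalerDl; apply: laddr; exact: IH.
pose x := fun n : nat => T (rabs L ((n.+1)%:R^-1 *: Sm n.+1)).
change (seq_oconv L x 0).
have hCC : 0 <= CC M by rewrite /CC; exact: sqr_ge0.
have key : forall K n, (0 < K)%N ->
    rle L ((2 * K%:R * n.+1%:R) *: x n) ((n.+1%:R * CC M + K%:R ^+ 2) *: e).
  move=> K n hK.
  have hn : (n.+1%:R : R) != 0 by rewrite pnatr_eq0.
  rewrite /x abZ; last by rewrite invr_ge0 ler0n.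
  rewrite (TZ Tlin) scalerA -mulrA mulfV // mulr1 -(TZ Tlin).
  apply: ltr (Tmono Tlin Tpos (Phi_abs HD he K (Sm n.+1))) _.
  rewrite (TD Tlin) (TZ Tlin) HTe scalerDl; apply: laddr; exact: Tphi.
have bound : forall K n (c : R), (0 < K)%N ->
    n.+1%:R * CC M + K%:R ^+ 2 <= c * (2 * K%:R * n.+1%:R) -> rle L (x n) (c *: e).
  move=> K n c hK hc.
  set t := 2 * K%:R * n.+1%:R : R.
  have ht : 0 < t by rewrite /t !mulr_gt0 ?ltr0n.
  have hti : 0 < t^-1 by rewrite invr_gt0.
  have := lscale (ltW hti) (key K n hK); rewrite -/t !scalerA mulVf ?gt_eqF // scale1r.
  move=> h; apply: ltr h _; apply: lscalel => //.
  by rewrite ler_pdivrMl // [t * _]mulrC.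
have x0 : forall n, rle L 0 (x n) by move=> n; apply: Tpos; apply: ab0.
have xub : forall n, rle L (x n) ((CC M + 1) *: e).
  move=> n; apply: (bound 1%N) => //.
  have : (1 : R) <= n.+1%:R by rewrite ler1n.
  move=> h1; nra.
have xeps : forall eps : R, 0 < eps -> exists n0, forall n, (n0 <= n)%N -> rle L (x n) (eps *: e).
  move=> eps heps.
  pose K := (Num.Def.archi_bound (CC M / eps)).+1.
  have hK1 : CC M <= eps * K%:R.
    have := archi_boundP (divr_ge0 hCC (ltW heps)); rewrite -/K => h.
    have : CC M / eps <= K%:R by rewrite /K -natr1; apply: ltW; apply: lt_le_trans h _; lra.
    by rewrite ler_pdivrMr // mulrC.
  pose n0 := Num.Def.archi_bound (K%:R / eps).
  exists n0 => n hn.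
  have hK2 : K%:R <= eps * n.+1%:R.
    have := archi_boundP (divr_ge0 (ler0n R K) (ltW heps)); rewrite -/n0 => h.
    have : (n0%:R : R) <= n.+1%:R by rewrite ler_nat; apply: leq_trans hn _.
    move=> h2; have : K%:R / eps <= n.+1%:R by apply: ltW; apply: lt_le_trans h h2.
    by rewrite ler_pdivrMr // mulrC.
  apply: (bound K) => //.
  have hKp : (0 : R) <= K%:R by rewrite ler0n.
  have hnp : (0 : R) <= n.+1%:R by rewrite ler0n.
  nra.
pose p := fun n : nat => supE L (fun y => exists m, (n <= m)%N /\ y = x m).
have p_spec : forall n, is_sup L (fun y => exists m, (n <= m)%N /\ y = x m) (p n).
  move=> n; apply: (supE_spec HD); first by exists (x n), n.
  by exists ((CC M + 1) *: e) => y [m [_ ->]].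
exists p; split; last first.
  move=> n; rewrite subr0 ab_id //; case: (p_spec n) => h _; apply: h; by exists n.
split.
  move=> a b hab; case: (p_spec b) => _; apply => y [m [hm ->]].
  by case: (p_spec a) => h _; apply: h; exists m; split => //; apply: leq_trans hm.
split.
  move=> y [n ->]; apply: ltr (x0 n) _; case: (p_spec n) => h _; apply: h; by exists n.
move=> u hu; apply: (arch HD he) => eps heps.
have [n0 hn0] := xeps eps heps.
apply: ltr (hu (p n0) (ex_intro _ n0 erefl)) _.
by case: (p_spec n0) => _; apply => y [m [hm ->]]; apply: hn0.
Qed.
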